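(* Let $\{G_i\}$ be a family of connected graphs with common induced subgraph $J$, embedded as $J_i\subseteq G_i$, and let $H=\amalg\{(G_i|J_i)\}$. Then every $G_i$ is isometrically embedded in $H$ if and only if the family $\{(G_i|J_i)\}$ is isometric.
   Context: $d_G$ is shortest-path distance in $G$. $J$ is a common induced subgraph of each $G_i$ via injective maps $\iota_i:V(J)\to V(G_i)$ with $\iota_i(x)\iota_i(y)\in E(G_i)$ iff $xy\in E(J)$; $J_i$ is the induced image and $x^i=\iota_i(x)$. $H=\amalg\{(G_i|J_i)\}$ is obtained from the disjoint union of the $G_i$ by identifying, for each $x\in V(J)$, all $x^i$ into one vertex; each $G_i$ is regarded as a subgraph of $H$. A subgraph $G$ of a graph $H$ is isometrically embedded in $H$ if $d_G(u,v)=d_H(u,v)$ for all $u,v\in V(G)$. The family $\{(G_i|J_i)\}$ is isometric if $d_{G_i}(a^i,b^i)=d_{G_j}(a^j,b^j)$ for all $i,j$ and all $a,b\in V(J)$. *)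

(* Defs.v *)
From Stdlib Require Import ClassicalEpsilon.
Set Implicit Arguments.
Unset Strict Implicit.

Record graph := Graph {
  vert : Type;
  adj : vert -> vert -> Prop;
  adj_sym : forall u v, adj u v -> adj v u;
  adj_irrefl : forall u, ~ adj u u
}.
Arguments adj : clear implicits.

Inductive walk {V : Type} (R : V -> V -> Prop) : V -> V -> nat -> Prop :=
| walk0 : forall u, walk R u u 0
| walkS : forall u w v n, R u w -> walk R w v n -> walk R u v (S n).

Definition is_dist {V : Type} (R : V -> V -> Prop) (u v : V) (n : nat) : Prop :=
  walk R u v n /\ forall m, walk R u v m -> n <= m.

(* shortest-path distance d(u,v) (meaningful whenever u, v are connected) *)
Definition dist {V : Type} (R : V -> V -> Prop) (u v : V) : nat :=
  epsilon (inhabits 0) (fun n => is_dist R u v n).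

Definition connected (G : graph) : Prop :=
  forall u v : vert G, exists n, walk (adj G) u v n.

Definition induced_embedding (J G : graph) (f : vert J -> vert G) : Prop :=
  (forall x y, f x = f y -> x = y) /\
  (forall x y, adj G (f x) (f y) <-> adj J x y).

(* The amalgam H = coprod (G_i | J_i): disjoint union of the G_i with all
   copies x^i of each x in V(J) identified.  Vertices of H: the vertices of J
   (the identified classes) plus the vertices of each G_i outside J_i. *)
Definition outer_vert (I : Type) (G : I -> graph) (J : graph)
  (iota : forall i, vert J -> vert (G i)) : Type :=
  {p : {i : I & vert (G i)} | ~ exists x, iota (projT1 p) x = projT2 p}.

Definition amal_vert (I : Type) (G : I -> graph) (J : graph)
  (iota : forall i, vert J -> vert (G i)) : Type := (vert J + outer_vert iota)%type.

(* the canonical map G_i -> H (the quotient map restricted to G_i) *)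
Definition amal_emb (I : Type) (G : I -> graph) (J : graph)
  (iota : forall i, vert J -> vert (G i)) (i : I) (v : vert (G i)) : amal_vert iota :=
  match excluded_middle_informative (exists x, iota i x = v) with
  | left h => inl (proj1_sig (constructive_indefinite_description _ h))
  | right h => inr (exist _ (existT _ i v) h)
  end.

Definition amal_adj (I : Type) (G : I -> graph) (J : graph)
  (iota : forall i, vert J -> vert (G i)) (a b : amal_vert iota) : Prop :=
  exists i (u v : vert (G i)), adj (G i) u v /\
    amal_emb iota u = a /\ amal_emb iota v = b.

Definition isometrically_embedded (I : Type) (G : I -> graph) (J : graph)
  (iota : forall i, vert J -> vert (G i)) (i : I) : Prop :=
  forall u v : vert (G i),
    dist (adj (G i)) u v = dist (@amal_adj _ _ _ iota) (amal_emb iota u) (amal_emb iota v).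

Definition isometric_family I (G : I -> graph) (J : graph)
  (iota : forall i, vert J -> vert (G i)) : Prop :=
  forall i j (a b : vert J),
    dist (adj (G i)) (iota i a) (iota i b) = dist (adj (G j)) (iota j a) (iota j b).

(* Main.v *)
Require Import Defs.
From Stdlib Require Import ClassicalEpsilon Classical Lia Eqdep Wf_nat.
Set Implicit Arguments.
Unset Strict Implicit.

Lemma dist_exists {V : Type} (R : V -> V -> Prop) u v :
  (exists n, walk R u v n) -> exists k, is_dist R u v k.
Proof.
  intros [n Hn]. revert Hn. induction n as [n IH] using lt_wf_ind. intros Hn.
  destruct (classic (exists m, m < n /\ walk R u v m)) as [[m [Hm Hw]]|Hno].
  - exact (IH m Hm Hw).
  - exists n. split; auto. intros m Hm.
    destruct (classic (m < n)) as [Hlt|Hlt]; [exfalso; apply Hno; eauto | lia].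
Qed.

Lemma dist_spec {V : Type} (R : V -> V -> Prop) u v :
  (exists n, walk R u v n) -> is_dist R u v (dist R u v).
Proof.
  intros H. apply dist_exists in H. unfold dist.
  apply epsilon_spec. exact H.
Qed.

Lemma is_dist_unique {V : Type} (R : V -> V -> Prop) u v n m :
  is_dist R u v n -> is_dist R u v m -> n = m.
Proof.
  intros [H1 H2] [H3 H4]. specialize (H2 m H3). specialize (H4 n H1). lia.
Qed.

Lemma walk_app {V : Type} (R : V -> V -> Prop) u w v n m :
  walk R u w n -> walk R w v m -> walk R u v (n + m).
Proof.
  induction 1; intros; simpl; auto. econstructor; eauto.
Qed.

Lemma emb_cases (I : Type) (G : I -> graph) (J : graph)
  (iota : forall i, vert J -> vert (G i)) i (v : vert (G i)) :
  (exists x, iota i x = v /\ amal_emb iota v = inl x) \/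
  (exists h, amal_emb iota v = inr (exist _ (existT _ i v) h)).
Proof.
  unfold amal_emb. destruct (excluded_middle_informative _) as [h|h].
  - left. destruct (constructive_indefinite_description _ h) as [x Hx]. simpl. eauto.
  - right. eauto.
Qed.

Lemma emb_inl (I : Type) (G : I -> graph) (J : graph)
  (iota : forall i, vert J -> vert (G i)) i (v : vert (G i)) x :
  amal_emb iota v = inl x -> v = iota i x.
Proof.
  intros E. destruct (emb_cases iota v) as [[y [Hy E']]|[h E']]; rewrite E' in E.
  - inversion E; subst; auto.
  - discriminate.
Qed.

Lemma emb_inr (I : Type) (G : I -> graph) (J : graph)
  (iota : forall i, vert J -> vert (G i)) i (v : vert (G i)) o :
  amal_emb iota v = inr o -> proj1_sig o = existT _ i v.
Proof.
  intros E. destruct (emb_cases iota v) as [[y [Hy E']]|[h E']]; rewrite E' in E.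
  - discriminate.
  - inversion E; subst; auto.
Qed.

Lemma emb_iota (I : Type) (G : I -> graph) (J : graph)
  (iota : forall i, vert J -> vert (G i))
  (Hind : forall i, induced_embedding (iota i)) i x :
  amal_emb iota (iota i x) = inl x.
Proof.
  destruct (emb_cases iota (iota i x)) as [[y [Hy E']]|[h E']].
  - rewrite E'. f_equal. apply (proj1 (Hind i)). exact Hy.
  - exfalso. apply h. exists x; reflexivity.
Qed.

Lemma emb_inr_eq (I : Type) (G : I -> graph) (J : graph)
  (iota : forall i, vert J -> vert (G i)) i k (u : vert (G i)) (p : vert (G k)) o :
  amal_emb iota u = inr o -> amal_emb iota p = inr o ->
  existT (fun i => vert (G i)) i u = existT _ k p.
Proof.
  intros E1 E2. apply emb_inr in E1. apply emb_inr in E2. congruence.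
Qed.

Lemma emb_inj (I : Type) (G : I -> graph) (J : graph)
  (iota : forall i, vert J -> vert (G i)) i (u v : vert (G i)) :
  amal_emb iota u = amal_emb iota v -> u = v.
Proof.
  intros E. destruct (amal_emb iota u) as [x|o] eqn:Eu.
  - apply emb_inl in Eu. symmetry in E. apply emb_inl in E. congruence.
  - symmetry in E. pose proof (emb_inr_eq Eu E) as H.
    apply inj_pair2 in H. auto.
Qed.

Lemma map_walk (I : Type) (G : I -> graph) (J : graph)
  (iota : forall i, vert J -> vert (G i)) i (u v : vert (G i)) n :
  walk (adj (G i)) u v n ->
  walk (@amal_adj _ _ _ iota) (amal_emb iota u) (amal_emb iota v) n.
Proof.
  induction 1; econstructor; eauto. exists i, u, w. auto.
Qed.

Lemma transfer (I : Type) (G : I -> graph) (J : graph)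
  (iota : forall i, vert J -> vert (G i))
  (Hind : forall i, induced_embedding (iota i))
  (Hconn : forall i, connected (G i))
  (Hiso : isometric_family iota)
  i k (u v : vert (G i)) (p q : vert (G k)) m :
  amal_emb iota p = amal_emb iota u -> amal_emb iota q = amal_emb iota v ->
  walk (adj (G k)) p q m -> exists m', m' <= m /\ walk (adj (G i)) u v m'.
Proof.
  intros Ea Eb W.
  destruct (amal_emb iota u) as [x|o] eqn:Eu.
  - destruct (amal_emb iota v) as [z|o'] eqn:Ev.
    + apply emb_inl in Eu, Ev, Ea, Eb. subst.
      pose proof (@dist_spec _ (adj (G k)) (iota k x) (iota k z) (ex_intro _ m W)) as [_ D1].
      pose proof (@dist_spec _ (adj (G i)) (iota i x) (iota i z) (Hconn i _ _)) as [D2 _].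
      specialize (D1 m W). rewrite (Hiso k i) in D1. eauto.
    + pose proof (emb_inr_eq Eb Ev) as H. inversion H; subst.
      apply inj_pair2 in H. subst.
      apply emb_inl in Eu, Ea. subst. exists m; split; auto.
  - pose proof (emb_inr_eq Ea Eu) as H. inversion H; subst.
    apply inj_pair2 in H. subst.
    apply emb_inj in Eb. subst. exists m; split; auto.
Qed.

Lemma exc (I : Type) (G : I -> graph) (J : graph)
  (iota : forall i, vert J -> vert (G i))
  (Hind : forall i, induced_embedding (iota i)) a b n :
  walk (@amal_adj _ _ _ iota) a b n ->
  a = b \/ exists k (p : vert (G k)), amal_emb iota p = a /\
    ((exists q m, amal_emb iota q = b /\ m <= n /\ walk (adj (G k)) p q m) \/
     (exists y m1 m2, walk (adj (G k)) p (iota k y) m1 /\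
        walk (@amal_adj _ _ _ iota) (inl y) b m2 /\ m1 + m2 <= n /\ m2 < n)).
Proof.
  induction 1 as [a|a c b n Hac W IH]; [left; auto|right].
  destruct Hac as [l [p [q [Hpq [Ep Eq]]]]].
  exists l, p. split; auto.
  destruct (amal_emb iota q) as [z|o] eqn:Eq'.
  - right. apply emb_inl in Eq'. subst. exists z, 1, n.
    repeat split; try lia; auto. econstructor; eauto. constructor.
  - destruct IH as [<-|[k' [p' [Ep' [[q' [m [Eq1 [Hm W']]]]|[y [m1 [m2 [W1 [W2 [H1 H2]]]]]]]]]]].
    + left. exists q, 1. split; [congruence|]. split; [lia|]. econstructor; eauto. constructor.
    + rewrite <- Eq in Ep'. pose proof (emb_inr_eq Ep' Eq') as H.
      inversion H; subst. apply inj_pair2 in H. subst.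
      left. exists q', (S m). repeat split; auto; try lia. econstructor; eauto.
    + rewrite <- Eq in Ep'. pose proof (emb_inr_eq Ep' Eq') as H.
      inversion H; subst. apply inj_pair2 in H. subst.
      right. exists y, (S m1), m2. repeat split; auto; try lia. econstructor; eauto.
Qed.

Lemma mainC (I : Type) (G : I -> graph) (J : graph)
  (iota : forall i, vert J -> vert (G i))
  (Hind : forall i, induced_embedding (iota i))
  (Hconn : forall i, connected (G i))
  (Hiso : isometric_family iota) n :
  forall a b, walk (@amal_adj _ _ _ iota) a b n ->
  forall i (u v : vert (G i)), amal_emb iota u = a -> amal_emb iota v = b ->
  exists m, m <= n /\ walk (adj (G i)) u v m.
Proof.
  induction n as [n IH] using lt_wf_ind.
  intros a b W i u v Ea Eb.
  destruct (exc Hind W) as [<-|[k [p [Ep [[q [m [Eq [Hm Wk]]]]|[y [m1 [m2 [W1 [W2 [H1 H2]]]]]]]]]]].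
  - rewrite <- Eb in Ea. apply emb_inj in Ea. subst. exists 0. split; [lia|constructor].
  - rewrite <- Ea in Ep. rewrite <- Eb in Eq.
    destruct (transfer Hind Hconn Hiso Ep Eq Wk) as [m' [Hm' W']]. exists m'. split; auto; lia.
  - rewrite <- Ea in Ep.
    assert (Ey : amal_emb iota (iota k y) = amal_emb iota (iota i y)).
    { rewrite !emb_iota; auto. }
    destruct (transfer Hind Hconn Hiso Ep Ey W1) as [m1' [Hm1 W1']].
    destruct (IH m2 H2 _ _ W2 i (iota i y) v (emb_iota Hind i y) Eb) as [m2' [Hm2 W2']].
    exists (m1' + m2'). split; [lia|]. eapply walk_app; eauto.
Qed.

Theorem lemma2 (I : Type) (G : I -> graph) (J : graph)
  (iota : forall i, vert J -> vert (G i))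
  (Hind : forall i, induced_embedding (iota i))
  (Hconn : forall i, connected (G i)) :
  (forall i, isometrically_embedded iota i) <-> isometric_family iota.
Proof.
  split.
  - intros Hemb i j a b. rewrite (Hemb i), (Hemb j), !emb_iota; auto.
  - intros Hiso i u v.
    pose proof (@dist_spec _ (adj (G i)) u v (Hconn i u v)) as D1.
    destruct (Hconn i u v) as [n0 W0].
    pose proof (@dist_spec _ (@amal_adj _ _ _ iota) (amal_emb iota u) (amal_emb iota v)
       (ex_intro _ n0 (map_walk iota W0))) as D2.
    destruct D1 as [W1 M1]. destruct D2 as [W2 M2].
    specialize (M2 _ (map_walk iota W1)).
    destruct (mainC Hind Hconn Hiso W2 (u:=u) (v:=v) eq_refl eq_refl) as [m [Hm Wm]].
    specialize (M1 _ Wm). lia.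
Qed.
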